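(* Let $G$ be a modular noetherian right $\ell$-group. Define $\deg' : G^- \to \mathbb{Z}_{\geq 0}$ by $\deg'(g) = k$ whenever $g = x_k x_{k-1} \cdots x_1$ with all $x_i \in X(G^-)$. Then there is a unique group homomorphism $\deg : G \to \mathbb{Z}$ with $\deg(g) = \deg'(g)$ for all $g \in G^-$. It is given by $\deg(g_2^{-1} g_1) = \deg'(g_1) - \deg'(g_2)$ for $g_1,g_2 \in G^-$.
   Context: A right $\ell$-group is a group $G$ (identity $e$) with a right-invariant partial order $\leq$ ($x \leq y \Rightarrow xz \leq yz$) under which $G$ is a lattice. It is modular if this lattice is modular. It is noetherian if for every $g \in G$ the set $\{h : h \geq g\}$ satisfies the descending chain condition and the set $\{h : h \leq g\}$ satisfies the ascending chain condition. $G^- := \{g : g \leq e\}$. $X(G^-) := \{x \in G : x < e$ and there is no $y$ with $x < y < e\}$ is the set of dual atoms. In a modular noetherian right $\ell$-group, every element of $G^-$ is a product of elements of $X(G^-)$, and any two such factorizations of the same element have the same number of factors. Hence $\deg'$ is a well-defined monoid homomorphism. *)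

(* Defs.v *)
From Stdlib Require Import ZArith List.
Import ListNotations.

Record right_lgroup := RightLGroup {
  carrier :> Type;
  mul : carrier -> carrier -> carrier;
  inv : carrier -> carrier;
  e : carrier;
  le : carrier -> carrier -> Prop;
  meet : carrier -> carrier -> carrier;
  join : carrier -> carrier -> carrier;
  mulA : forall x y z, mul x (mul y z) = mul (mul x y) z;
  mul1g : forall x, mul e x = x;
  mulVg : forall x, mul (inv x) x = e;
  le_refl : forall x, le x x;
  le_anti : forall x y, le x y -> le y x -> x = y;
  le_trans : forall x y z, le x y -> le y z -> le x z;
  le_mulr : forall x y z, le x y -> le (mul x z) (mul y z);
  meet_l : forall x y, le (meet x y) x;
  meet_r : forall x y, le (meet x y) y;
  meet_glb : forall x y z, le z x -> le z y -> le z (meet x y);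
  join_l : forall x y, le x (join x y);
  join_r : forall x y, le y (join x y);
  join_lub : forall x y z, le x z -> le y z -> le (join x y) z
}.

Arguments mul {r}.
Arguments inv {r}.
Arguments e {r}.
Arguments le {r}.
Arguments meet {r}.
Arguments join {r}.

Definition lt {G : right_lgroup} (x y : G) : Prop := le x y /\ x <> y.

Definition modular (G : right_lgroup) : Prop :=
  forall a b c : G, le a c -> join a (meet b c) = meet (join a b) c.

Definition noetherian (G : right_lgroup) : Prop :=
  forall g : G,
    (forall f : nat -> G, (forall n, le g (f n)) -> (forall n, le (f (S n)) (f n)) ->
       exists N, forall n, N <= n -> f n = f N) /\
    (forall f : nat -> G, (forall n, le (f n) g) -> (forall n, le (f n) (f (S n))) ->
       exists N, forall n, N <= n -> f n = f N).

Definition negcone {G : right_lgroup} (g : G) : Prop := le g e.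

Definition dual_atom {G : right_lgroup} (x : G) : Prop :=
  lt x e /\ ~ (exists y : G, lt x y /\ lt y e).

Definition prodl {G : right_lgroup} (s : list G) : G := fold_right mul e s.

(* degp g k  <->  g = x_k ... x_1 with all x_i in X(G^-), i.e. deg'(g) = k *)
Definition degp {G : right_lgroup} (g : G) (k : nat) : Prop :=
  exists s : list G, length s = k /\ Forall dual_atom s /\ g = prodl s.

Definition group_hom_Z {G : right_lgroup} (d : G -> Z) : Prop :=
  forall x y : G, d (mul x y) = (d x + d y)%Z.

(* Main.v *)
Require Import Defs.
From Stdlib Require Import ZArith List Lia Classical ClassicalEpsilon.
Import ListNotations.

Lemma mulgV {G : right_lgroup} (x : G) : mul x (inv x) = e.
Proof.
  rewrite <- (mul1g G (mul x (inv x))).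
  rewrite <- (mulVg G (inv x)) at 1.
  rewrite <- mulA. rewrite (mulA _ (inv x) x (inv x)).
  rewrite mulVg, mul1g. apply mulVg.
Qed.

Lemma mulg1 {G : right_lgroup} (x : G) : mul x e = x.
Proof. rewrite <- (mulVg G x), mulA, mulgV. apply mul1g. Qed.

Lemma mulKV {G : right_lgroup} (x z : G) : mul (mul x z) (inv z) = x.
Proof. rewrite <- mulA, mulgV; apply mulg1. Qed.

Lemma mulVK {G : right_lgroup} (x z : G) : mul (mul x (inv z)) z = x.
Proof. rewrite <- mulA, mulVg; apply mulg1. Qed.

Lemma mulr_inj {G : right_lgroup} (x y z : G) : mul x z = mul y z -> x = y.
Proof. intro H. rewrite <- (mulKV x z), H. apply mulKV. Qed.

Lemma lt_mulr {G : right_lgroup} (x y z : G) : lt x y -> lt (mul x z) (mul y z).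
Proof.
  intros [H1 H2]; split. apply le_mulr; auto. intro H; apply H2; eapply mulr_inj; eauto.
Qed.

Lemma lt_mulr_inv {G : right_lgroup} (x y z : G) : lt (mul x z) (mul y z) -> lt x y.
Proof.
  intro H. apply (lt_mulr _ _ (inv z)) in H. rewrite !mulKV in H. exact H.
Qed.

Definition cv {G : right_lgroup} (a b : G) : Prop :=
  lt a b /\ ~ (exists z, lt a z /\ lt z b).

Lemma cv_mulr {G : right_lgroup} (a b z : G) : cv a b -> cv (mul a z) (mul b z).
Proof.
  intros [H1 H2]; split. apply lt_mulr; auto.
  intros [w [Hw1 Hw2]]. apply H2. exists (mul w (inv z)).
  split; apply (lt_mulr_inv _ _ z); rewrite mulVK; auto.
Qed.

Lemma atom_cv {G : right_lgroup} (x h : G) : dual_atom x -> cv (mul x h) h.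
Proof. intro H. pose proof (cv_mulr x e h H) as H'. rewrite mul1g in H'. exact H'. Qed.

Lemma cv_atom {G : right_lgroup} (a b : G) : cv a b -> dual_atom (mul a (inv b)).
Proof. intro H. pose proof (cv_mulr a b (inv b) H) as H'. rewrite mulgV in H'. exact H'. Qed.

Lemma prodl_app {G : right_lgroup} (s t : list G) : prodl (s ++ t) = mul (prodl s) (prodl t).
Proof.
  induction s as [|x s IH]; simpl. now rewrite mul1g. unfold prodl in *; simpl. rewrite IH. apply mulA.
Qed.

Lemma degp_le {G : right_lgroup} (g : G) k : degp g k -> le g e.
Proof.
  intros [s [_ [Hs ->]]]. induction Hs; simpl. apply le_refl.
  apply le_trans with (mul e (prodl l)). apply le_mulr. apply H.
  rewrite mul1g. exact IHHs.
Qed.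

Lemma degp_e {G : right_lgroup} : degp (@e G) 0.
Proof. exists []; simpl; auto. Qed.

Lemma degp_cons {G : right_lgroup} (x h : G) k : dual_atom x -> degp h k -> degp (mul x h) (S k).
Proof. intros Hx [s [Hl [Hs ->]]]. exists (x :: s); simpl; auto. Qed.

Lemma degp_inv {G : right_lgroup} (g : G) k : degp g (S k) ->
  exists x h, dual_atom x /\ degp h k /\ g = mul x h.
Proof.
  intros [s [Hl [Hs ->]]]. destruct s as [|x s]; simpl in Hl; try discriminate.
  inversion Hs; subst. exists x, (prodl s). split; auto. split; auto.
  exists s; auto.
Qed.

Lemma degp_0 {G : right_lgroup} (g : G) : degp g 0 -> g = e.
Proof. intros [s [Hl [_ ->]]]. destruct s; simpl in *; auto; discriminate. Qed.

Lemma degp_app {G : right_lgroup} (a b : G) k m : degp a k -> degp b m -> degp (mul a b) (k + m).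
Proof.
  intros [s [Hl [Hs ->]]] [t [Hl' [Ht ->]]]. exists (s ++ t).
  rewrite length_app, prodl_app. repeat split; auto. apply Forall_app; auto.
Qed.

Lemma build_chain (A : Type) (P : A -> Prop) (R : A -> A -> Prop) :
  (forall x, P x -> exists y, P y /\ R x y) -> forall x0, P x0 ->
  exists f : nat -> A, forall n, P (f n) /\ R (f n) (f (S n)).
Proof.
  intros H x0 H0.
  assert (H' : forall x : {x | P x}, {y : {y | P y} | R (proj1_sig x) (proj1_sig y)}).
  { intros [x Px]. apply constructive_indefinite_description.
    destruct (H x Px) as [y [Py Ry]]. exists (exist _ y Py). exact Ry. }
  set (F := fix F (n : nat) : {x | P x} :=
         match n with 0 => exist _ x0 H0 | S n => proj1_sig (H' (F n)) end).
  exists (fun n => proj1_sig (F n)). intro n. split.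
  apply (proj2_sig (F n)). simpl. apply (proj2_sig (H' (F n))).
Qed.

Lemma existence {G : right_lgroup} (Hn : noetherian G) (g : G) : le g e -> exists k, degp g k.
Proof.
  intro Hg. apply NNPP. intro Hbad.
  set (P := fun h : G => le h e /\ ~ exists k, degp h k).
  destruct (classic (exists h0, P h0 /\ forall h', P h' -> ~ lt h0 h')) as [[h0 [Ph0 Hmax]]|Hno].
  2:{ assert (Hs : forall x, P x -> exists y, P y /\ lt x y).
      { intros x Px. apply NNPP; intro Hy. apply Hno. exists x; split; auto.
        intros h' Ph' Hlt. apply Hy; eauto. }
      destruct (build_chain _ P lt Hs g (conj Hg Hbad)) as [f Hf].
      destruct (proj2 (Hn e) f) as [N HN].
      - intro n; apply (Hf n).
      - intro n; apply (Hf n).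
      - destruct (Hf N) as [_ [_ Hne]]. apply Hne. symmetry. apply HN. lia. }
  destruct Ph0 as [Hh0e Hh0bad].
  assert (Hlt0 : lt h0 e).
  { split; auto. intro Heq. apply Hh0bad. exists 0. rewrite Heq. apply degp_e. }
  set (Q := fun k : G => lt h0 k /\ le k e).
  destruct (classic (exists k, Q k /\ forall k', Q k' -> ~ lt k' k)) as [[k [[Hk1 Hk2] Hmin]]|Hno].
  2:{ assert (Hs : forall x, Q x -> exists y, Q y /\ lt y x).
      { intros x Qx. apply NNPP; intro Hy. apply Hno. exists x; split; auto.
        intros h' Ph' Hlt. apply Hy; eauto. }
      destruct (build_chain _ Q (fun x y => lt y x) Hs e (conj Hlt0 (le_refl _ _))) as [f Hf].
      destruct (proj1 (Hn h0) f) as [N HN].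
      - intro n; apply (Hf n).
      - intro n; apply (Hf n).
      - destruct (Hf N) as [_ [_ Hne]]. apply Hne. apply HN. lia. }
  assert (Hcv : cv h0 k).
  { split; auto. intros [z [Hz1 Hz2]]. apply (Hmin z); auto. split; auto.
    apply le_trans with k; auto. apply Hz2. }
  assert (Hkg : exists m, degp k m).
  { apply NNPP; intro Hkb. apply (Hmax k); auto. split; auto. }
  destruct Hkg as [m Hm]. apply Hh0bad. exists (S m).
  rewrite <- (mulVK h0 k). apply degp_cons; auto. apply cv_atom; auto.
Qed.

Lemma cv_cases {G : right_lgroup} (g b w : G) : cv g b -> le g w -> le w b -> w = g \/ w = b.
Proof.
  intros [_ H] H1 H2. destruct (classic (w = g)); auto. destruct (classic (w = b)); auto.
  exfalso. apply H. exists w. split; split; auto.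
Qed.

Lemma diamond {G : right_lgroup} (Hmod : modular G) (g a b : G) :
  cv g a -> cv g b -> a <> b -> cv a (join a b).
Proof.
  intros Ha Hb Hab. split.
  - split. apply join_l. intro Heq. destruct Ha as [_ Ha]. apply Ha. exists b.
    split. apply Hb. split; auto. rewrite Heq. apply join_r.
  - intros [z [Hz1 Hz2]].
    assert (Hga : le g a) by apply Ha.
    assert (Hgz : le g z) by (apply le_trans with a; auto; apply Hz1).
    destruct (cv_cases g b (meet b z) Hb) as [Hw|Hw].
    + apply meet_glb; auto. apply Hb.
    + apply meet_l.
    + pose proof (Hmod a b z (proj1 Hz1)) as Hm. rewrite Hw in Hm.
      assert (E1 : join a g = a).
      { apply le_anti. apply join_lub; auto; apply le_refl. apply join_l. }
      assert (E2 : meet (join a b) z = z).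
      { apply le_anti. apply meet_r. apply meet_glb. apply Hz2. apply le_refl. }
      rewrite E1, E2 in Hm. apply (proj2 Hz1). exact Hm.
    + apply (proj2 Hz2). apply le_anti. apply Hz2.
      apply join_lub. apply Hz1. rewrite <- Hw. apply meet_r.
Qed.

Lemma uniqueness {G : right_lgroup} (Hmod : modular G) (Hn : noetherian G) :
  forall n (g : G) m, degp g n -> degp g m -> n = m.
Proof.
  induction n as [|n IH]; intros g m Hg Hm.
  - apply degp_0 in Hg; subst. destruct m; auto. exfalso.
    destruct (degp_inv _ _ Hm) as [x [h [Hx [Hh Heq]]]].
    pose proof (atom_cv x h Hx) as [[_ Hne] _]. apply Hne.
    apply le_anti. apply (proj1 (proj1 (atom_cv x h Hx))). rewrite <- Heq. apply (degp_le _ _ Hh).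
  - destruct m as [|m].
    + apply degp_0 in Hm; subst. exfalso.
      destruct (degp_inv _ _ Hg) as [x [h [Hx [Hh Heq]]]].
      pose proof (atom_cv x h Hx) as [[_ Hne] _]. apply Hne.
      apply le_anti. apply (proj1 (proj1 (atom_cv x h Hx))). rewrite <- Heq. apply (degp_le _ _ Hh).
    + destruct (degp_inv _ _ Hg) as [x [g' [Hx [Hg' Heq1]]]].
      destruct (degp_inv _ _ Hm) as [y [h' [Hy [Hh' Heq2]]]].
      pose proof (atom_cv x g' Hx) as C1. rewrite <- Heq1 in C1.
      pose proof (atom_cv y h' Hy) as C2. rewrite <- Heq2 in C2.
      destruct (classic (g' = h')) as [Eq|Ne].
      * subst. f_equal. eauto.
      * pose proof (diamond Hmod _ _ _ C1 C2 Ne) as D1.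
        pose proof (diamond Hmod _ _ _ C2 C1 (fun H => Ne (eq_sym H))) as D2.
        assert (Ej : join h' g' = join g' h').
        { apply le_anti; apply join_lub; first [apply join_l | apply join_r]. }
        rewrite Ej in D2.
        destruct (existence Hn (join g' h')) as [p Hp].
        { apply join_lub; eapply degp_le; eauto. }
        assert (P1 : degp g' (S p)).
        { rewrite <- (mulVK g' (join g' h')). apply degp_cons; auto. apply cv_atom; auto. }
        assert (P2 : degp h' (S p)).
        { rewrite <- (mulVK h' (join g' h')). apply degp_cons; auto. apply cv_atom; auto. }
        pose proof (IH _ _ Hg' P1). subst n. f_equal. eauto.
Qed.

Definition len {G : right_lgroup} (h : G) : nat := epsilon (inhabits 0) (fun k => degp h k).

Lemma len_spec {G : right_lgroup} (Hn : noetherian G) (h : G) : le h e -> degp h (len h).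
Proof. intro H. unfold len. apply epsilon_spec. apply existence; auto. Qed.

Lemma len_eq {G : right_lgroup} (Hmod : modular G) (Hn : noetherian G) (h : G) k :
  degp h k -> len h = k.
Proof. intro H. eapply (uniqueness Hmod Hn). apply len_spec; auto. eapply degp_le; eauto. auto. Qed.

Lemma le_mul_e {G : right_lgroup} (a b : G) : le a e -> le b e -> le (mul a b) e.
Proof. intros Ha Hb. apply le_trans with (mul e b). apply le_mulr; auto. rewrite mul1g; auto. Qed.

Lemma len_mul {G : right_lgroup} (Hmod : modular G) (Hn : noetherian G) (a b : G) :
  le a e -> le b e -> len (mul a b) = len a + len b.
Proof. intros Ha Hb. apply (len_eq Hmod Hn). apply degp_app; apply len_spec; auto. Qed.

Lemma dec {G : right_lgroup} (g : G) : exists d1 d2, le d1 e /\ le d2 e /\ mul d2 g = d1.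
Proof.
  exists (mul (meet e (inv g)) g), (meet e (inv g)). split; [|split; auto].
  rewrite <- (mulVg G g). apply le_mulr. apply meet_r. apply meet_l.
Qed.

Lemma keyK {G : right_lgroup} (Hmod : modular G) (Hn : noetherian G) (g a1 a2 b1 b2 : G) :
  le a1 e -> le a2 e -> le b1 e -> le b2 e -> mul a2 g = a1 -> mul b2 g = b1 ->
  (Z.of_nat (len a1) - Z.of_nat (len a2) = Z.of_nat (len b1) - Z.of_nat (len b2))%Z.
Proof.
  intros H1 H2 H3 H4 Ea Eb.
  destruct (dec (mul b2 (inv a2))) as [d1 [d2 [Hd1 [Hd2 Ed]]]].
  assert (E1 : mul d2 b2 = mul d1 a2).
  { rewrite <- Ed. rewrite (mulA _ d2 b2 (inv a2)). rewrite mulVK. reflexivity. }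
  assert (E2 : mul d2 b1 = mul d1 a1).
  { rewrite <- Eb, <- Ea. rewrite !mulA, E1. reflexivity. }
  pose proof (f_equal len E1) as L1. pose proof (f_equal len E2) as L2.
  rewrite !(len_mul Hmod Hn) in L1, L2 by auto. lia.
Qed.

Theorem mainTheorem3 (G : right_lgroup) (Hmod : modular G) (Hnoeth : noetherian G) :
  exists deg : G -> Z,
    group_hom_Z deg /\
    (forall (g : G) (k : nat), negcone g -> degp g k -> deg g = Z.of_nat k) /\
    (forall (g1 g2 : G) (k1 k2 : nat), negcone g1 -> negcone g2 ->
       degp g1 k1 -> degp g2 k2 ->
       deg (mul (inv g2) g1) = (Z.of_nat k1 - Z.of_nat k2)%Z) /\
    (forall deg2 : G -> Z, group_hom_Z deg2 ->
       (forall (g : G) (k : nat), negcone g -> degp g k -> deg2 g = Z.of_nat k) ->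
       forall g : G, deg2 g = deg g).
Proof.
  set (deg := fun g : G => (Z.of_nat (len (mul (meet e (inv g)) g)) - Z.of_nat (len (meet e (inv g))))%Z).
  assert (degK : forall g a1 a2, le a1 e -> le a2 e -> mul a2 g = a1 ->
            deg g = (Z.of_nat (len a1) - Z.of_nat (len a2))%Z).
  { intros g a1 a2 H1 H2 E. unfold deg. apply (keyK Hmod Hnoeth g); auto.
    rewrite <- (mulVg G g). apply le_mulr. apply meet_r. apply meet_l. }
  assert (len_e : len (@e G) = 0) by (apply (len_eq Hmod Hnoeth); apply degp_e).
  exists deg. split; [|split; [|split]].
  - intros x y.
    destruct (dec x) as [a1 [a2 [Ha1 [Ha2 Ea]]]].
    destruct (dec y) as [b1 [b2 [Hb1 [Hb2 Eb]]]].
    destruct (dec (mul a1 (inv b2))) as [d1 [d2 [Hd1 [Hd2 Ed]]]].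
    assert (E1 : mul d2 a1 = mul d1 b2).
    { rewrite <- Ed. rewrite (mulA _ d2 a1 (inv b2)). rewrite mulVK. reflexivity. }
    assert (E2 : mul (mul d2 a2) (mul x y) = mul d1 b1).
    { rewrite <- Eb. rewrite <- !mulA. rewrite (mulA _ a2 x y), Ea. rewrite mulA, E1.
      rewrite <- mulA. reflexivity. }
    rewrite (degK _ _ _ (le_mul_e _ _ Hd1 Hb1) (le_mul_e _ _ Hd2 Ha2) E2).
    rewrite (degK _ _ _ Ha1 Ha2 Ea), (degK _ _ _ Hb1 Hb2 Eb).
    pose proof (f_equal len E1) as L1.
    rewrite !(len_mul Hmod Hnoeth) in L1 |- * by auto. lia.
  - intros g k Hg Hk. rewrite (degK g g e Hg (le_refl _ _) (mul1g G g)).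
    rewrite len_e, (len_eq Hmod Hnoeth _ _ Hk). lia.
  - intros g1 g2 k1 k2 H1 H2 K1 K2.
    assert (E : mul g2 (mul (inv g2) g1) = g1) by (rewrite mulA, mulgV; apply mul1g).
    rewrite (degK _ _ _ H1 H2 E), (len_eq Hmod Hnoeth _ _ K1), (len_eq Hmod Hnoeth _ _ K2).
    reflexivity.
  - intros deg2 Hhom Hagree g.
    destruct (dec g) as [a1 [a2 [Ha1 [Ha2 Ea]]]].
    rewrite (degK _ _ _ Ha1 Ha2 Ea).
    pose proof (Hhom a2 g) as Hh. rewrite Ea in Hh.
    rewrite (Hagree a1 (len a1) Ha1 (len_spec Hnoeth a1 Ha1)) in Hh.
    rewrite (Hagree a2 (len a2) Ha2 (len_spec Hnoeth a2 Ha2)) in Hh. lia.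
Qed.
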